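(* Let $G$ be an edge transitive graph with at least one edge, and let $\lambda$ and $\tau$ be the greatest and least eigenvalues of its adjacency matrix. Then \[\chi_{vec}(G)=\bar{\vartheta}(G)=1-\frac{\lambda}{\tau}.\]
   Context: Graphs are finite, simple and undirected. For a real $k>1$, a vector $k$-coloring of $G$ is a map $\varphi$ from $V(G)$ to the unit sphere of some $\mathbb{R}^d$ with $\varphi(u)^T\varphi(v)\le -\frac1{k-1}$ whenever $u\sim v$, and $\chi_{vec}(G)$ is the smallest such $k$. A strict vector $k$-coloring is such a map with $\varphi(u)^T\varphi(v)=-\frac1{k-1}$ whenever $u\sim v$, and $\bar{\vartheta}(G)$ is the smallest such $k$ (equivalently the Lovász theta function of the complement of $G$). *)

(* Defs.v *)
From HB Require Import structures.
From mathcomp Require Import all_boot all_order all_algebra all_fingroup.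
From mathcomp Require Import reals.
Set Implicit Arguments. Unset Strict Implicit. Unset Printing Implicit Defensive.
Import Order.TTheory GRing.Theory Num.Theory.
Local Open Scope ring_scope.

Definition simple_graph (n : nat) (e : rel 'I_n) : Prop :=
  symmetric e /\ irreflexive e.

Definition graph_aut (n : nat) (e : rel 'I_n) (s : {perm 'I_n}) : Prop :=
  forall u v, e (s u) (s v) = e u v.

Definition edge_transitive (n : nat) (e : rel 'I_n) : Prop :=
  forall u v x y, e u v -> e x y ->
    exists s : {perm 'I_n}, graph_aut e s /\
      ((s u = x /\ s v = y) \/ (s u = y /\ s v = x)).

Definition adjmx (R : realType) (n : nat) (e : rel 'I_n) : 'M[R]_n :=
  \matrix_(i, j) (e i j)%:R.

Definition dotv (R : realType) (d : nat) (x y : 'rV[R]_d) : R :=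
  \sum_(i < d) x 0 i * y 0 i.

Definition vec_colorable (R : realType) (n : nat) (e : rel 'I_n) (k : R) : Prop :=
  1 < k /\ exists (d : nat) (phi : 'I_n -> 'rV[R]_d),
    (forall u, dotv (phi u) (phi u) = 1) /\
    (forall u v, e u v -> dotv (phi u) (phi v) <= - (k - 1)^-1).

Definition strict_vec_colorable (R : realType) (n : nat) (e : rel 'I_n) (k : R) : Prop :=
  1 < k /\ exists (d : nat) (phi : 'I_n -> 'rV[R]_d),
    (forall u, dotv (phi u) (phi u) = 1) /\
    (forall u v, e u v -> dotv (phi u) (phi v) = - (k - 1)^-1).

Definition is_least (R : realType) (P : R -> Prop) (c : R) : Prop :=
  P c /\ forall k, P k -> c <= k.

(* chi_vec(G) = c  and  thetabar(G) = c. *)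
Definition vec_chromatic_number_is (R : realType) (n : nat) (e : rel 'I_n) (c : R) :=
  is_least (vec_colorable e) c.
Definition strict_vec_chromatic_number_is (R : realType) (n : nat) (e : rel 'I_n) (c : R) :=
  is_least (strict_vec_colorable e) c.

Definition greatest_eigenvalue (R : realType) (n : nat) (A : 'M[R]_n) (l : R) : Prop :=
  eigenvalue A l /\ forall m, eigenvalue A m -> m <= l.
Definition least_eigenvalue (R : realType) (n : nat) (A : 'M[R]_n) (t : R) : Prop :=
  eigenvalue A t /\ forall m, eigenvalue A m -> t <= m.

(* Main.v *)
Require Import Defs.
From HB Require Import structures.
From mathcomp Require Import all_boot all_order all_algebra all_fingroup.
From mathcomp Require Import reals complex ring lra.
Import Order.TTheory GRing.Theory Num.Theory.
Local Open Scope ring_scope.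
Set Implicit Arguments. Unset Strict Implicit. Unset Printing Implicit Defensive.

Lemma conj_realc (R : realType) (r : R) : ((real_complex R r)^* = real_complex R r)%R.
Proof. by apply/eqP; rewrite -CrealE complex_real. Qed.

Lemma spec_bound (R : realType) n (A : 'M[R]_n) (lam tau : R) :
  A^T = A -> greatest_eigenvalue A lam -> least_eigenvalue A tau ->
  forall x : 'rV[R]_n, tau * (x *m x^T) 0 0 <= (x *m A *m x^T) 0 0 /\
                       (x *m A *m x^T) 0 0 <= lam * (x *m x^T) 0 0.
Proof.
move=> Asym [_ Hlam] [_ Htau] x.
pose f := real_complex R.
pose AC := map_mx f A.
have ACh : AC \is hermsymmx.
  apply/is_hermitianmxP; rewrite expr0 scale1r; apply/matrixP => i j.
  by rewrite !mxE conj_realc; congr (f _); rewrite -[in LHS]Asym mxE.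
have /orthomx_spectralP ACE := hermitian_normalmx ACh.
set P := spectralmx AC in ACE; set d := spectral_diag AC in ACE.
have Pu : P \is unitarymx := spectral_unitarymx AC.
rewrite invmx_unitary // in ACE.
have dreal := hermitian_spectral_diag_real ACh.
(* each diagonal entry is a real eigenvalue of A *)
have deig : forall j, exists r, d 0 j = f r /\ tau <= r <= lam.
  move=> j; have := (mxOverP dreal) 0 j.
  case/complex_realP => r dr; exists r; split => //.
  have eAC : eigenvalue AC (f r).
    apply/eigenvalueP; exists (row j P).
      have -> : row j P *m AC = row j (P *m AC) by rewrite -row_mul.
      rewrite ACE !mulmxA (unitarymxP Pu) mul1mx row_mul row_diag_mx.
      by rewrite -scalemxAl -rowE dr.
    apply/eqP => /(congr1 (fun v => dotmx v v)).
    by rewrite (row_unitarymxP Pu) eqxx dotmxE mul0mx mxE => /eqP; rewrite oner_eq0.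
  have eA : eigenvalue A r.
    by rewrite eigenvalue_root_char -(fmorph_root f) map_char_poly -eigenvalue_root_char.
  by rewrite Htau // Hlam.
pose xC := map_mx f x.
have xCt : (xC ^t*)%sesqui = map_mx f x^T.
  by apply/matrixP => i j; rewrite !mxE conj_realc.
pose y := xC *m (P ^t*)%sesqui.
have yt : (y ^t*)%sesqui = P *m (xC ^t*)%sesqui.
  by rewrite /y trmx_mul map_mxM trmxCK.
have Eq : f ((x *m A *m x^T) 0 0) = (y *m diag_mx d *m (y ^t*)%sesqui) 0 0.
  have -> : y *m diag_mx d *m (y ^t*)%sesqui = xC *m AC *m (xC ^t*)%sesqui.
    by rewrite yt /y ACE !mulmxA.
  by rewrite xCt /xC /AC -!map_mxM [RHS]mxE.
have EN : f ((x *m x^T) 0 0) = (y *m (y ^t*)%sesqui) 0 0.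
  by rewrite yt /y mulmxA mulmxKtV // xCt /xC -map_mxM [RHS]mxE.
have Sd : (y *m diag_mx d *m (y ^t*)%sesqui) 0 0 = \sum_j d 0 j * (y 0 j * (y 0 j)^*).
  rewrite mxE; apply: eq_bigr => j _; rewrite mul_mx_diag !mxE; ring.
have SN : (y *m (y ^t*)%sesqui) 0 0 = \sum_j (y 0 j * (y 0 j)^*).
  by rewrite mxE; apply: eq_bigr => j _; rewrite !mxE.
split; rewrite -lecR rmorphM /= -/f Eq EN Sd SN mulr_sumr; apply: ler_sum => j _.
  have [r [-> /andP[hr _]]] := deig j.
  by apply: ler_wpM2r; [exact: mul_conjC_ge0 | rewrite lecR].
have [r [-> /andP[_ hr]]] := deig j.
by apply: ler_wpM2r; [exact: mul_conjC_ge0 | rewrite lecR].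
Qed.

Definition Qf (R : realType) n (e : rel 'I_n) (x : 'I_n -> R) :=
  \sum_i \sum_j (e i j)%:R * (x i * x j).
Definition Nf (R : realType) n (x : 'I_n -> R) := \sum_i x i ^+ 2.

Lemma quad_mxE (R : realType) n (e : rel 'I_n) (x : 'I_n -> R) :
  ((\row_i x i) *m adjmx R e *m (\row_i x i)^T) 0 0 = Qf e x.
Proof.
rewrite mxE /Qf exchange_big /=; apply: eq_bigr => j _.
rewrite !mxE big_distrl /=; apply: eq_bigr => i _; rewrite !mxE; ring.
Qed.

Lemma norm_mxE (R : realType) n (x : 'I_n -> R) :
  ((\row_i x i) *m (\row_i x i)^T) 0 0 = Nf x.
Proof. by rewrite mxE; apply: eq_bigr => i _; rewrite !mxE expr2. Qed.

Lemma adj_sym (R : realType) n (e : rel 'I_n) : symmetric e -> (adjmx R e)^T = adjmx R e.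
Proof. by move=> es; apply/matrixP => i j; rewrite !mxE es. Qed.

Lemma spec_fun (R : realType) n (e : rel 'I_n) (lam tau : R) :
  symmetric e -> greatest_eigenvalue (adjmx R e) lam -> least_eigenvalue (adjmx R e) tau ->
  forall x : 'I_n -> R, tau * Nf x <= Qf e x /\ Qf e x <= lam * Nf x.
Proof.
move=> es hl ht x; have := spec_bound (adj_sym R es) hl ht (\row_i x i).
by rewrite quad_mxE norm_mxE.
Qed.

Lemma sum_delta (R : realType) n (F : 'I_n -> R) (u : 'I_n) :
  \sum_j F j * (j == u)%:R = F u.
Proof.
rewrite (bigD1 u) //= eqxx mulr1 big1 ?addr0 // => j /negbTE ->; by rewrite mulr0.
Qed.

Lemma tau_le (R : realType) n (e : rel 'I_n) (tau : R) :
  simple_graph e -> (exists u v, e u v) ->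
  (forall x : 'I_n -> R, tau * Nf x <= Qf e x) -> tau <= -1.
Proof.
move=> [es ei] [u [v euv]] H.
have uv : u != v by apply: contraTneq euv => ->; rewrite ei.
pose x := fun i : 'I_n => (i == u)%:R - (i == v)%:R :> R.
have := H x.
have inner : forall i, \sum_j (e i j)%:R * x j = (e i u)%:R - (e i v)%:R :> R.
  move=> i; rewrite /x; under eq_bigr => j _ do rewrite mulrBr.
  by rewrite sumrB !sum_delta.
have -> : Qf e x = -2.
  rewrite /Qf (eq_bigr (fun i => x i * ((e i u)%:R - (e i v)%:R))); last first.
    move=> i _; rewrite -inner big_distrr /=; apply: eq_bigr => j _; ring.
  rewrite /x; under eq_bigr => i _ do rewrite mulrBl.
  rewrite sumrB; under eq_bigr => i _ do rewrite mulrC.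
  under [X in _ - X]eq_bigr => i _ do rewrite mulrC.
  rewrite !sum_delta !ei (es v u) euv /=; ring.
have -> : Nf x = 2.
  rewrite /Nf (eq_bigr (fun i => x i * ((i == u)%:R - (i == v)%:R))); last first.
    by move=> i _; rewrite expr2.
  under eq_bigr => i _ do rewrite mulrBr.
  rewrite sumrB !sum_delta /x eqxx (negbTE uv) eq_sym (negbTE uv) eqxx /=; ring.
move=> h; lra.
Qed.

Lemma row_funK (R : realType) n (v : 'rV[R]_n) : \row_i v 0 i = v.
Proof. by apply/rowP => i; rewrite mxE. Qed.

Lemma Nf_gt0 (R : realType) n (v : 'rV[R]_n) : v != 0 -> 0 < Nf (fun i => v 0 i).
Proof.
move=> vnz; rewrite lt_def sumr_ge0 ?andbT; last by move=> i _; exact: sqr_ge0.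
apply: contra vnz => /eqP H; apply/eqP/rowP => i; rewrite mxE.
have /(_ i isT) : forall i, true -> (v 0 i) ^+ 2 = 0.
  by apply: psumr_eq0P H => j _; exact: sqr_ge0.
by move/eqP; rewrite sqrf_eq0 => /eqP.
Qed.

Lemma dotv_sym (R : realType) d (x y : 'rV[R]_d) : dotv x y = dotv y x.
Proof. by apply: eq_bigr => i _; rewrite mulrC. Qed.

Lemma lower_bound (R : realType) n (e : rel 'I_n) (lam tau k : R) :
  (forall x : 'I_n -> R, tau * Nf x <= Qf e x) -> tau < 0 ->
  eigenvalue (adjmx R e) lam -> vec_colorable e k -> 1 - lam / tau <= k.
Proof.
move=> Hlow tneg /eigenvalueP [v vA vnz] [k1 [d [phi [phi1 phie]]]].
pose a i := `|v 0 i|.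
have Qv : Qf e (fun i => v 0 i) = lam * Nf (fun i => v 0 i).
  by rewrite -quad_mxE -norm_mxE !row_funK vA -scalemxAl mxE.
have Na : Nf a = Nf (fun i => v 0 i).
  by apply: eq_bigr => i _; rewrite /a real_normK // num_real.
have Qa : Qf e (fun i => v 0 i) <= Qf e a.
  apply: ler_sum => i _; apply: ler_sum => j _; apply: ler_wpM2l => //.
  by rewrite /a -normrM ler_norm.
have Npos : 0 < Nf a by rewrite Na Nf_gt0.
pose c := - (k - 1)^-1.
have cneg : c < 0 by rewrite /c oppr_lt0 invr_gt0 subr_gt0.
pose z (t : 'I_d) i := a i * phi i 0 t.
have H1 : \sum_t tau * Nf (z t) <= \sum_t Qf e (z t) by apply: ler_sum => t _.
have H2 : \sum_t Nf (z t) = Nf a.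
  rewrite /Nf exchange_big /=; apply: eq_bigr => i _.
  rewrite -(mulr1 (a i ^+ 2)) -(phi1 i) /dotv big_distrr /=.
  by apply: eq_bigr => t _; rewrite /z; ring.
have H3 : \sum_t Qf e (z t) = \sum_i \sum_j (e i j)%:R * (a i * a j) * dotv (phi i) (phi j).
  rewrite /Qf exchange_big /=; apply: eq_bigr => i _.
  rewrite exchange_big /=; apply: eq_bigr => j _.
  rewrite /dotv big_distrr /=; apply: eq_bigr => t _; rewrite /z; ring.
have H4 : \sum_i \sum_j (e i j)%:R * (a i * a j) * dotv (phi i) (phi j) <= c * Qf e a.
  rewrite /Qf big_distrr /=; apply: ler_sum => i _; rewrite big_distrr /=.
  apply: ler_sum => j _; case eij : (e i j).
    rewrite mul1r (mulrC c); apply: ler_wpM2l; last exact: phie.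
    by rewrite /a mulr_ge0.
  by rewrite !mul0r mulr0.
rewrite -big_distrr /= H2 H3 in H1.
have H5 : c * Qf e a <= c * (lam * Nf a).
  by rewrite ler_nM2l // Na -Qv.
have H6 : tau * Nf a <= (c * lam) * Nf a.
  by rewrite -mulrA; apply: le_trans H5; apply: le_trans H4.
rewrite ler_pM2r // in H6.
have km1 : 0 < k - 1 by rewrite subr_gt0.
have Hc : c * (k - 1) = -1 by rewrite /c mulNr mulVf ?gt_eqF.
have Ht : tau / tau = 1 by rewrite mulfV ?lt_eqF.
rewrite /c in Hc H6.
set it := tau^-1 in Ht *; set ic := (k - 1)^-1 in Hc H6.
have h : tau * (k - 1) <= - lam.
  have : tau * (k - 1) <= (- ic * lam) * (k - 1) by rewrite ler_pM2r.
  have -> : (- ic * lam) * (k - 1) = lam * (- ic * (k - 1)) by ring.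
  by rewrite Hc mulrN1.
have itneg : it < 0 by rewrite /it invr_lt0.
have : (- lam) * it <= (tau * (k - 1)) * it by rewrite ler_nM2r.
have -> : (tau * (k - 1)) * it = (tau * it) * (k - 1) by ring.
rewrite Ht mul1r => h2; lra.
Qed.

Definition autb n (e : rel 'I_n) (s : {perm 'I_n}) : bool :=
  [forall u, forall v, e (s u) (s v) == e u v].

Lemma autbP n (e : rel 'I_n) s : reflect (graph_aut e s) (autb e s).
Proof.
apply: (iffP idP) => [/forallP H u v | H]; first by have /forallP /(_ v) /eqP := H u.
by apply/forallP => u; apply/forallP => v; rewrite H.
Qed.

Lemma autb1 n (e : rel 'I_n) : autb e 1%g.
Proof. by apply/autbP => u v; rewrite !perm1. Qed.

Lemma autb_mul n (e : rel 'I_n) g s : autb e g -> autb e (g * s)%g = autb e s.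
Proof.
move/autbP => Hg; apply/autbP/autbP => H u v.
  have := H (g^-1 u)%g (g^-1 v)%g; rewrite !permM !permKV => ->.
  by rewrite -Hg !permKV.
by rewrite !permM H Hg.
Qed.

Definition Fm (R : realType) n (e : rel 'I_n) (w : 'I_n -> R) u v :=
  \sum_(s | autb e s) w (s u) * w (s v).

Lemma Fm_inv (R : realType) n (e : rel 'I_n) (w : 'I_n -> R) g u v :
  autb e g -> Fm e w (g u) (g v) = Fm e w u v.
Proof.
move=> ag; rewrite /Fm [RHS](reindex_inj (mulgI g)) /=.
apply: eq_big => [s|s _]; first by rewrite autb_mul.
by rewrite !permM.
Qed.

Lemma Fm_sym (R : realType) n (e : rel 'I_n) (w : 'I_n -> R) u v :
  Fm e w u v = Fm e w v u.
Proof. by apply: eq_bigr => s _; rewrite mulrC. Qed.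

Lemma Fm_ge0 (R : realType) n (e : rel 'I_n) (w : 'I_n -> R) u : 0 <= Fm e w u u.
Proof. by apply: sumr_ge0 => s _; rewrite -expr2 sqr_ge0. Qed.

Lemma sum_perm (R : realType) n (s : {perm 'I_n}) (G : 'I_n -> R) :
  \sum_i G (s i) = \sum_i G i.
Proof. by rewrite [RHS](reindex_inj (@perm_inj _ s)). Qed.

Lemma Qf_perm (R : realType) n (e : rel 'I_n) (w : 'I_n -> R) s :
  autb e s -> Qf e (fun i => w (s i)) = Qf e w.
Proof.
move/autbP => as_.
rewrite /Qf; transitivity (\sum_i \sum_j (e (s i) (s j))%:R * (w (s i) * w (s j))).
  by apply: eq_bigr => i _; apply: eq_bigr => j _; rewrite as_.
apply: (etrans (sum_perm s (fun i => \sum_j (e i (s j))%:R * (w i * w (s j))))).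
apply: eq_bigr => i _; exact: (sum_perm s (fun j => (e i j)%:R * (w i * w j))).
Qed.

Lemma Nf_perm (R : realType) n (w : 'I_n -> R) (s : {perm 'I_n}) :
  Nf (fun i => w (s i)) = Nf w.
Proof. exact: (sum_perm s (fun i => w i ^+ 2)). Qed.

Lemma Fm_trace (R : realType) n (e : rel 'I_n) (w : 'I_n -> R) :
  \sum_u \sum_v (e u v)%:R * Fm e w u v = \sum_(s | autb e s) Qf e w.
Proof.
under [RHS]eq_bigr => s as_ do rewrite -(Qf_perm w as_).
rewrite /Qf.
rewrite [RHS]exchange_big /=.
apply: eq_bigr => u _; rewrite [RHS]exchange_big /=.
by apply: eq_bigr => v _; rewrite /Fm big_distrr.
Qed.

Lemma Fm_diag (R : realType) n (e : rel 'I_n) (w : 'I_n -> R) :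
  \sum_u Fm e w u u = \sum_(s | autb e s) Nf w.
Proof.
under [RHS]eq_bigr => s _ do rewrite -(Nf_perm w s).
rewrite /Fm exchange_big /=; apply: eq_bigr => s _; apply: eq_bigr => u _.
by rewrite expr2.
Qed.

Lemma sum_pos_edge (R : realType) n (e : rel 'I_n) u0 v0 :
  e u0 v0 -> 0 < \sum_u \sum_v (e u v)%:R :> R.
Proof.
move=> euv.
have H : forall u, 0 <= \sum_v (e u v)%:R :> R by move=> u; exact: sumr_ge0.
rewrite (bigD1 u0) //= (bigD1 v0) //= euv.
have h1 : 0 <= \sum_(i < n | i != v0) (e u0 i)%:R :> R by exact: sumr_ge0.
have h2 : 0 <= \sum_(i < n | i != u0) \sum_(v < n) (e i v)%:R :> R.
  by apply: sumr_ge0 => i _; exact: H.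
rewrite /=; lra.
Qed.

Definition psi (R : realType) n (e : rel 'I_n) (w : 'I_n -> R) (u : 'I_n) :
  'rV[R]_#|{perm 'I_n}| :=
  \row_i (if autb e (enum_val i) then w (enum_val i u) else 0).

Lemma dot_psi (R : realType) n (e : rel 'I_n) (w : 'I_n -> R) u v :
  dotv (psi e w u) (psi e w v) = Fm e w u v.
Proof.
rewrite /dotv /Fm [RHS]big_mkcond /=.
transitivity (\sum_(s in {perm 'I_n}) (if autb e s then w (s u) * w (s v) else 0)).
  rewrite [RHS]big_enum_val; apply: eq_bigr => i _; rewrite !mxE.
  by case: ifP => _; rewrite ?mulr0.
by apply: eq_bigl => s; rewrite inE.
Qed.

Lemma dotvZ (R : realType) d (a b : R) (x y : 'rV[R]_d) :
  dotv (a *: x) (b *: y) = a * b * dotv x y.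
Proof.
rewrite /dotv big_distrr /=; apply: eq_bigr => i _; rewrite !mxE; ring.
Qed.

Lemma upper_bound (R : realType) n (e : rel 'I_n) (lam tau : R) u0 v0 :
  simple_graph e -> edge_transitive e -> e u0 v0 ->
  (forall x : 'I_n -> R, tau * Nf x <= Qf e x /\ Qf e x <= lam * Nf x) -> tau < 0 ->
  eigenvalue (adjmx R e) tau ->
  exists k, strict_vec_colorable e k /\ k <= 1 - lam / tau.
Proof.
move=> [es ei] et euv Hspec tneg /eigenvalueP [wv wA wnz].
pose w i := wv 0 i.
have Qw : Qf e w = tau * Nf w.
  by rewrite -quad_mxE -norm_mxE !row_funK wA -scalemxAl mxE.
have Nw : 0 < Nf w by exact: Nf_gt0.
pose F := Fm e w.
have SFE : \sum_u F u u = \sum_(s | autb e s) Nf w by exact: Fm_diag.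
have trace : \sum_u \sum_v (e u v)%:R * F u v = tau * \sum_u F u u.
  by rewrite Fm_trace SFE big_distrr /=; apply: eq_bigr => s _; rewrite Qw.
have SFpos : 0 < \sum_u F u u.
  rewrite SFE (bigD1 1%g) ?autb1 //=.
  have : 0 <= \sum_(s | autb e s && (s != 1%g)) Nf w by apply: sumr_ge0 => s _; exact: ltW.
  lra.
have edge : forall x y, e x y -> F x y = F u0 v0 /\
   ((F x x = F u0 u0 /\ F y y = F v0 v0) \/ (F x x = F v0 v0 /\ F y y = F u0 u0)).
  move=> x y exy; have [s [/autbP as_ [[<- <-]|[<- <-]]]] := et _ _ _ _ euv exy.
    by rewrite /F !Fm_inv //; split=> //; left.
  by rewrite /F !Fm_inv // Fm_sym; split=> //; right.
pose c0 := F u0 v0.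
have trace2 : \sum_u \sum_v (e u v)%:R * F u v = c0 * \sum_u \sum_v (e u v)%:R.
  rewrite big_distrr /=; apply: eq_bigr => u _; rewrite big_distrr /=.
  apply: eq_bigr => v _; case euv' : (e u v); last by rewrite !mul0r mulr0.
  by rewrite mul1r mulr1 (edge _ _ euv').1.
have c0neg : c0 < 0.
  have Epos := sum_pos_edge R euv.
  have : c0 * \sum_u \sum_v (e u v)%:R < 0 :> R.
    by rewrite -trace2 trace nmulr_rlt0.
  by rewrite pmulr_llt0.
have diag_pos : forall x, F x x = 0 -> forall y, F x y = 0.
  move=> x Fx0 y; rewrite /F /Fm big1 // => s as_.
  have /(_ s as_) : forall s, autb e s -> w (s x) * w (s x) = 0.
    by apply: psumr_eq0P Fx0 => s' _; rewrite -expr2 sqr_ge0.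
  by move/eqP; rewrite mulf_eq0 orbb => /eqP ->; rewrite mul0r.
have Fu0 : 0 < F u0 u0.
  rewrite lt_def Fm_ge0 andbT; apply/eqP => /diag_pos /(_ v0) h.
  by move: c0neg; rewrite /c0 h ltxx.
have Fv0 : 0 < F v0 v0.
  rewrite lt_def Fm_ge0 andbT; apply/eqP => /diag_pos /(_ u0) h.
  by move: c0neg; rewrite /c0 /F Fm_sym -/F h ltxx.
pose sq x := Num.sqrt (F x x).
have sqsq : forall x, sq x ^+ 2 = F x x by move=> x; rewrite sqr_sqrtr // Fm_ge0.
have squ0 : 0 < sq u0 by rewrite sqrtr_gt0.
have sqv0 : 0 < sq v0 by rewrite sqrtr_gt0.
pose beta := c0 / (sq u0 * sq v0).
have betaneg : beta < 0 by rewrite /beta pmulr_llt0 // invr_gt0 mulr_gt0.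
have edge2 : forall x y, e x y -> [/\ 0 < F x x, 0 < F y y & F x y = beta * (sq x * sq y)].
  move=> x y exy; have [-> [[hx hy]|[hx hy]]] := edge x y exy.
  - rewrite hx hy; split=> //; rewrite /sq hx hy -/(sq u0) -/(sq v0) /beta.
    by rewrite divfK // mulf_neq0 // gt_eqF.
  - rewrite hx hy; split=> //; rewrite /sq hx hy -/(sq u0) -/(sq v0) /beta.
    by rewrite (mulrC (sq v0)) divfK // mulf_neq0 // gt_eqF.
have trace3 : \sum_u \sum_v (e u v)%:R * F u v = beta * Qf e sq.
  rewrite /Qf big_distrr /=; apply: eq_bigr => u _; rewrite big_distrr /=.
  apply: eq_bigr => v _; case euv' : (e u v); last by rewrite !mul0r mulr0.
  by have [_ _ ->] := edge2 _ _ euv'; rewrite !mul1r.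
have NF : Nf sq = \sum_u F u u by apply: eq_bigr => x _; rewrite sqsq.
have key : beta * Qf e sq = tau * Nf sq by rewrite -trace3 trace NF.
have Npos : 0 < Nf sq by rewrite NF.
have Qpos : 0 < Qf e sq.
  have : beta * Qf e sq < 0 by rewrite key nmulr_rlt0.
  by rewrite nmulr_rlt0.
have [_ Qle] := Hspec sq.
have lampos : 0 < lam.
  have : 0 < lam * Nf sq by exact: lt_le_trans Qle.
  by rewrite pmulr_lgt0.
have bl : beta * lam <= tau.
  have : beta * (lam * Nf sq) <= beta * Qf e sq by rewrite ler_nM2l.
  by rewrite key mulrA ler_pM2r.
exists (1 - beta^-1); split; last first.
  have Hb : beta * beta^-1 = 1 by rewrite mulfV ?lt_eqF.
  have Ht : tau * tau^-1 = 1 by rewrite mulfV ?lt_eqF.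
  have ibneg : beta^-1 < 0 by rewrite invr_lt0.
  have itneg : tau^-1 < 0 by rewrite invr_lt0.
  set ib := beta^-1 in Hb ibneg *; set it := tau^-1 in Ht itneg *.
  have : (beta * lam) * (ib * it) <= tau * (ib * it) by rewrite ler_pM2r // nmulr_rgt0.
  have -> : (beta * lam) * (ib * it) = (beta * ib) * lam * it by ring.
  have -> : tau * (ib * it) = (tau * it) * ib by ring.
  rewrite Hb Ht !mul1r => h; lra.
split; first by rewrite ltrDl oppr_gt0 invr_lt0.
pose i0 := enum_rank (1%g : {perm 'I_n}).
pose unitv := \row_(i < #|{perm 'I_n}|) ((i == i0)%:R : R).
have unit1 : dotv unitv unitv = 1.
  rewrite /dotv (eq_bigr (fun i => (i == i0)%:R * (i == i0)%:R)); last by move=> i _; rewrite !mxE.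
  by rewrite sum_delta eqxx.
exists #|{perm 'I_n}|, (fun x => if 0 < F x x then (sq x)^-1 *: psi e w x else unitv).
split.
  move=> x; case: ifP => hx //.
  rewrite dotvZ dot_psi -/F -sqsq; field.
  by rewrite gt_eqF // sqrtr_gt0.
move=> x y exy; have [hx hy hxy] := edge2 _ _ exy.
rewrite hx hy dotvZ dot_psi -/F hxy; field.
have -> : beta - 1 + -1 * beta = -1 by ring.
by rewrite oppr_eq0 oner_eq0 lt_eqF // !gt_eqF ?sqrtr_gt0.
Qed.

Lemma strict_vec (R : realType) n (e : rel 'I_n) (k : R) :
  strict_vec_colorable e k -> vec_colorable e k.
Proof.
move=> [k1 [d [phi [h1 h2]]]]; split=> //; exists d, phi; split=> // u v euv.
by rewrite h2.
Qed.

Theorem corollary5p3 (R : realType) (n : nat) (e : rel 'I_n)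
    (lambda tau : R) :
  simple_graph e ->
  edge_transitive e ->
  (exists u v, e u v) ->
  greatest_eigenvalue (adjmx R e) lambda ->
  least_eigenvalue (adjmx R e) tau ->
  vec_chromatic_number_is e (1 - lambda / tau) /\
  strict_vec_chromatic_number_is e (1 - lambda / tau).
Proof.
move=> [es ei] et [u0 [v0 euv]] hl ht.
have Hspec := spec_fun es hl ht.
have tneg : tau < 0.
  have := tau_le (conj es ei) (ex_intro _ u0 (ex_intro _ v0 euv)) (fun x => (Hspec x).1).
  move=> h; lra.
have LB : forall k, vec_colorable e k -> 1 - lambda / tau <= k.
  by move=> k; apply: lower_bound (fun x => (Hspec x).1) tneg hl.1.
have [k [sk kle]] := upper_bound (conj es ei) et euv Hspec tneg ht.1.
have keq : k = 1 - lambda / tau.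
  by apply/le_anti; rewrite kle LB //; exact: strict_vec.
rewrite -keq; split; split.
- exact: strict_vec.
- by move=> k' /LB; rewrite keq.
- exact: sk.
- by move=> k' /strict_vec /LB; rewrite keq.
Qed.
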